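(* Let $\mathbb{K}$ be a field of characteristic zero, $\delta\in\mathbb{K}$, and $\lambda$ a bipartition. (i) Suppose that for every $\mu\in\operatorname{Rem}^\bullet(\lambda)$ there exists $\nu\in\operatorname{Add}^\circ(\lambda)$ with $D_{\nu,\mu}(\delta)=1$. Then $x_\lambda(\delta)$ has no pair of adjacent vertices $j,j+1$ labelled $(\vee,\wedge)$, $(\bigcirc,\wedge)$, or $(\vee,\times)$. (ii) Suppose that for every $\mu\in\operatorname{Rem}^\circ(\lambda)$ there exists $\nu\in\operatorname{Add}^\bullet(\lambda)$ with $D_{\nu,\mu}(\delta)=1$. Then $x_\lambda(\delta)$ has no pair of adjacent vertices $j,j+1$ labelled $(\vee,\wedge)$, $(\vee,\bigcirc)$, or $(\times,\wedge)$.
   Context: A partition is a weakly decreasing sequence $\alpha=(\alpha_1,\alpha_2,\dots)$ of nonnegative integers, almost all zero. A bipartition is a pair $\lambda=(\lambda^\bullet,\lambda^\circ)$ of partitions. $\operatorname{Add}^\bullet(\lambda)$ (resp. $\operatorname{Add}^\circ(\lambda)$) is the set of bipartitions obtained from $\lambda$ by adding a box to $\lambda^\bullet$ (resp. $\lambda^\circ$). $\operatorname{Rem}^\bullet(\lambda)$ and $\operatorname{Rem}^\circ(\lambda)$ are defined likewise by removing a box. Set $I_\wedge(\lambda)=\{\lambda^\bullet_i-(i-1):i\ge1\}$ and $I_\vee(\lambda,\delta)=\{i-\delta-\lambda^\circ_i:i\ge1\}$. The weight diagram $x_\lambda(\delta)$ labels each integer $j$ by: - $\bigcirc$ if $j$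 is in neither set; - $\wedge$ if $j$ is only in $I_\wedge(\lambda)$; - $\vee$ if $j$ is only in $I_\vee(\lambda,\delta)$; - $\times$ if $j$ is in both. The cap diagram $c_\lambda(\delta)$ is built from $x_\lambda(\delta)$ iteratively. At each step, draw a cap connecting $i<j$ whenever $i$ is labelled $\vee$, $j$ is labelled $\wedge$, and every integer strictly between them is labelled $\bigcirc$ or $\times$ or already lies on an earlier cap. Repeat until no more caps can be drawn. Vertices joined by a cap are connected. $x_\mu(\delta)$ is linked to $x_\lambda(\delta)$ if it is obtained from $x_\lambda(\delta)$ by interchanging labels on finitely many pairs of connected vertices. $D_{\lambda,\mu}(\delta)=1$ if $x_\mu(\delta)$ is linked to $x_\lambda(\delta)$, and $0$ otherwise. *)

(* Defs.v *)
From mathcomp Require Import all_boot all_algebra.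
Set Implicit Arguments. Unset Strict Implicit. Unset Printing Implicit Defensive.
Import GRing.Theory Num.Theory.
Local Open Scope ring_scope.

(* A partition is represented canonically as the finite list of its nonzero
   parts, weakly decreasing; alpha_i (i >= 1) is [part alpha i]. *)
Definition is_partition (a : seq nat) : Prop :=
  sorted geq a /\ all (fun x => (0 < x)%N) a.

Definition part (a : seq nat) (i : nat) : nat := nth 0%N a i.-1.

Definition bipart := (seq nat * seq nat)%type.
Definition bul (l : bipart) := l.1.
Definition cir (l : bipart) := l.2.
Definition is_bipart (l : bipart) : Prop := is_partition (bul l) /\ is_partition (cir l).

Definition add_box (a b : seq nat) : Prop :=
  exists k, (1 <= k)%N /\ part b k = (part a k).+1 /\
            forall i, (1 <= i)%N -> i != k -> part b i = part a i.

Definition AddB (l m : bipart) : Prop :=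
  is_bipart m /\ add_box (bul l) (bul m) /\ cir m = cir l.
Definition AddC (l m : bipart) : Prop :=
  is_bipart m /\ add_box (cir l) (cir m) /\ bul m = bul l.
Definition RemB (l m : bipart) : Prop :=
  is_bipart m /\ add_box (bul m) (bul l) /\ cir m = cir l.
Definition RemC (l m : bipart) : Prop :=
  is_bipart m /\ add_box (cir m) (cir l) /\ bul m = bul l.

Section Weight.
Variable K : fieldType.

Definition inW (l : bipart) (j : int) : Prop :=
  exists i, (1 <= i)%N /\ j = (part (bul l) i)%:Z - (i.-1)%:Z.

Definition inV (l : bipart) (d : K) (j : int) : Prop :=
  exists i, (1 <= i)%N /\ (j%:~R : K) = i%:R - d - (part (cir l) i)%:R.

Inductive label := LCirc | LUp (* wedge *) | LDown (* vee *) | LCross.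

Definition is_label (l : bipart) (d : K) (j : int) (lab : label) : Prop :=
  match lab with
  | LCirc => ~ inW l j /\ ~ inV l d j
  | LUp => inW l j /\ ~ inV l d j
  | LDown => ~ inW l j /\ inV l d j
  | LCross => inW l j /\ inV l d j
  end.

(* capped l d n i j : the cap (i,j) has been drawn within the first n steps *)
Fixpoint capped (l : bipart) (d : K) (n : nat) (i j : int) : Prop :=
  match n with
  | 0%N => False
  | n'.+1 =>
      capped l d n' i j \/
      (i < j /\ is_label l d i LDown /\ is_label l d j LUp /\
          ~ (exists a b, capped l d n' a b /\ (i = a \/ i = b)) /\
          ~ (exists a b, capped l d n' a b /\ (j = a \/ j = b)) /\
          forall k, i < k < j ->
            is_label l d k LCirc \/ is_label l d k LCross \/
            (exists a b, capped l d n' a b /\ (k = a \/ k = b)))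
  end.

Definition cap (l : bipart) (d : K) (i j : int) : Prop := exists n, capped l d n i j.

Definition swap_label (S : seq (int * int)) (j : int) (lab : label) : label :=
  if has (fun p => p.1 == j) S then LUp
  else if has (fun p => p.2 == j) S then LDown else lab.

(* D_{l,m}(d) = 1 : x_m(d) is linked to x_l(d) *)
Definition D_one (l m : bipart) (d : K) : Prop :=
  exists S : seq (int * int),
    (forall p, p \in S -> cap l d p.1 p.2) /\
    forall j lab, is_label l d j lab -> is_label m d j (swap_label S j lab).

End Weight.

(* Main.v *)
Require Import Defs.
From mathcomp Require Import all_boot all_algebra.
From mathcomp Require Import zify ring.
From Stdlib Require Import Classical.
Import GRing.Theory Num.Theory.
Set Implicit Arguments. Unset Strict Implicit.

Lemma nth_step (a : seq nat) : sorted geq a -> forall n, (nth 0 a n.+1 <= nth 0 a n)%N.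
Proof.
elim: a => [|x a IH] //= Hp [|n] /=.
  by case: a Hp {IH} => //= y a /andP[].
apply: IH; exact: path_sorted Hp.
Qed.

Lemma nth_mono (a : seq nat) : sorted geq a -> forall m n, (m <= n)%N -> (nth 0 a n <= nth 0 a m)%N.
Proof.
move=> Ha m n; elim: n => [|n IH]; first by rewrite leqn0 => /eqP ->.
rewrite leq_eqVlt => /orP[/eqP -> //|]; rewrite ltnS => /IH h.
exact: leq_trans (nth_step Ha n) h.
Qed.

Lemma part_mono (a : seq nat) : sorted geq a -> forall m n, (m <= n)%N -> (part a n <= part a m)%N.
Proof. move=> Ha m n h; apply: nth_mono => //; rewrite /part; lia. Qed.

Lemma step_sorted (s : seq nat) : (forall n, nth 0 s n.+1 <= nth 0 s n)%N -> sorted geq s.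
Proof. by move=> H; apply/(sortedP 0%N) => n _; apply: H. Qed.

Lemma filter_pos_nth (s : seq nat) : sorted geq s ->
  forall k, nth 0 [seq x <- s | (0 < x)%N] k = nth 0 s k.
Proof.
elim: s => [|x s IH] //= Hp k.
case: (posnP x) => [x0|xp].
  have Hs : forall k, nth 0 s k = 0%N.
    move=> k'; have := nth_mono (path_sorted Hp) (leq0n k').
    case: s Hp {IH} => [|y s] /=; first by rewrite nth_nil.
    move=> /andP[yx _]; rewrite x0 in yx; move=> h; rewrite /= in yx; lia.
  have IH2 := IH (path_sorted Hp); rewrite x0 /= IH2 Hs; case: k => //= k; by rewrite Hs.
rewrite /=; case: k => [|k] //=; apply: IH; exact: path_sorted Hp.
Qed.

Lemma remove_box (a : seq nat) i : is_partition a -> (1 <= i)%N -> (part a i.+1 < part a i)%N ->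
  exists b, is_partition b /\ part b i = (part a i).-1 /\
    forall k, (1 <= k)%N -> k != i -> part b k = part a k.
Proof.
move=> [Ha Hpos] i1 lt.
set s := set_nth 0%N a i.-1 (part a i).-1.
have Hs : forall n, nth 0 s n = if n == i.-1 then (part a i).-1 else nth 0 a n.
  by move=> n; rewrite /s nth_set_nth.
have Hss : sorted geq s.
  apply: step_sorted => n; rewrite !Hs.
  have := nth_step Ha n.
  case: (eqVneq n.+1 i.-1) => e1; case: (eqVneq n i.-1) => e2.
  - lia.
  - move: (nth_step Ha n); rewrite /part e1; lia.
  - rewrite /part e2 in lt *; have -> : i.-1.+1 = i.+1.-1 by lia. lia.
  - done.
exists [seq x <- s | (0 < x)%N]; split; first split.
- apply: sorted_filter => //; move=> x y z h1 h2; exact: leq_trans h2 h1.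
- exact: filter_all.
split.
- by rewrite /part filter_pos_nth // Hs eqxx.
- move=> k k1 ki; rewrite /part filter_pos_nth // Hs.
  have -> : (k.-1 == i.-1) = false by apply/eqP; lia.
  done.
Qed.

Local Open Scope ring_scope.
Lemma label_exists (K : fieldType) (n : bipart) (d : K) p : exists lab, is_label n d p lab.
Proof.
case: (classic (inW n p)) => hw; case: (classic (inV n d p)) => hv.
by exists LCross. by exists LUp. by exists LDown. by exists LCirc.
Qed.

Lemma D_cross (K : fieldType) (n m : bipart) (d : K) p :
  D_one n m d -> is_label m d p LCross -> is_label n d p LCross.
Proof.
case=> S [_ H] Hm; have [lab Hl] := label_exists n d p.
have := H _ _ Hl; move: Hm Hl; rewrite /swap_label.
case: (has (fun q => q.1 == p) S); case: (has (fun q => q.2 == p) S); case: lab => /=; tauto.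
Qed.

Lemma D_circ (K : fieldType) (n m : bipart) (d : K) p :
  D_one n m d -> is_label m d p LCirc -> is_label n d p LCirc.
Proof.
case=> S [_ H] Hm; have [lab Hl] := label_exists n d p.
have := H _ _ Hl; move: Hm Hl; rewrite /swap_label.
case: (has (fun q => q.1 == p) S); case: (has (fun q => q.2 == p) S); case: lab => /=; tauto.
Qed.

Lemma nat_inj (K : fieldType) (HK : [pchar K] =i pred0) (m n : nat) :
  (m%:R : K) = n%:R -> m = n.
Proof.
wlog: m n / (m <= n)%N.
  move=> W H; case: (leqP m n) => h; first exact: W.
  symmetry; apply: W => //; exact: ltnW.
move=> le H; have : ((n - m)%N%:R : K) = 0 by rewrite natrB // H subrr.
move/eqP; rewrite ((pcharf0P K).1 HK) subn_eq0 => h; apply/eqP; by rewrite eqn_leq le h.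
Qed.

Unset Implicit Arguments.

Theorem proposition2p5 (K : fieldType) (HK : [pchar K] =i pred0) (d : K)
    (l : bipart) (Hl : is_bipart l) :
  ((forall m, RemB l m -> exists n, AddC l n /\ D_one n m d) ->
     ~ exists j : int,
         (is_label l d j LDown /\ is_label l d (j + 1) LUp) \/
         (is_label l d j LCirc /\ is_label l d (j + 1) LUp) \/
         (is_label l d j LDown /\ is_label l d (j + 1) LCross)) /\
  ((forall m, RemC l m -> exists n, AddB l n /\ D_one n m d) ->
     ~ exists j : int,
         (is_label l d j LDown /\ is_label l d (j + 1) LUp) \/
         (is_label l d j LDown /\ is_label l d (j + 1) LCirc) \/
         (is_label l d j LCross /\ is_label l d (j + 1) LUp)).
Proof.
split.
- move=> H [j Hj].
  have [nW [W1 VV]] : ~ inW l j /\ inW l (j+1) /\ (inV l d j \/ ~ inV l d (j+1)).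
    by move: Hj => /=; tauto.
  have W1' := W1; case: W1' => i [i1 Hi].
  have Ha : is_partition (bul l) := Hl.1.
  have mono := part_mono Ha.1.
  have lt : (part (bul l) i.+1 < part (bul l) i)%N.
    have := mono _ _ (leqnSn i); rewrite leq_eqVlt => /orP[/eqP e|] //.
    exfalso; apply: nW; exists i.+1; split => //; rewrite e; lia.
  have [b [Hb [Hbi Hbk]]] := remove_box Ha i1 lt.
  have HR : RemB l (b, cir l).
    split; first by split => //; exact: Hl.2.
    split => //; exists i; split => //; split; last by move=> k k1 kn; rewrite Hbk.
    rewrite Hbi; lia.
  case: (H _ HR) => nu [[_ [_ Hnb]] HD].
  case: VV => [hv|hv].
  + have : is_label (b, cir l) d j LCross.
      split; last exact: hv.
      exists i; split => //; rewrite /bul /= Hbi; lia.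
    move/(D_cross HD) => [hw _]; apply: nW; move: hw; by rewrite /inW Hnb.
  + have : is_label (b, cir l) d (j+1) LCirc.
      split; last exact: hv.
      case=> k [k1 Hk]; rewrite /bul /= in Hk.
      case: (eqVneq k i) => [e|ne]; first by rewrite e Hbi in Hk; lia.
      rewrite Hbk // in Hk.
      case: (ltngtP k i) => c.
      * have := mono _ _ (ltnW c); lia.
      * have := mono _ _ c; lia.
      * by rewrite c eqxx in ne.
    move/(D_circ HD) => [hw _]; apply: hw; by rewrite /inW Hnb.
- move=> H [j Hj].
  have [V1 [nV WW]] : inV l d j /\ ~ inV l d (j+1) /\ (~ inW l j \/ inW l (j+1)).
    by move: Hj => /=; tauto.
  have V1' := V1; case: V1' => i [i1 Hi].
  have Hc : is_partition (cir l) := Hl.2.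
  have mono := part_mono Hc.1.
  have lt : (part (cir l) i.+1 < part (cir l) i)%N.
    have := mono _ _ (leqnSn i); rewrite leq_eqVlt => /orP[/eqP e|] //.
    exfalso; apply: nV; exists i.+1; split => //.
    rewrite e intrD Hi -addn1 natrD; ring.
  have [b [Hb [Hbi Hbk]]] := remove_box Hc i1 lt.
  have pos : (0 < part (cir l) i)%N by lia.
  have HR : RemC l (bul l, b).
    split; first by split => //; exact: Hl.1.
    split => //; exists i; split => //; split; last by move=> k k1 kn; rewrite Hbk.
    rewrite Hbi; lia.
  case: (H _ HR) => nu [[_ [_ Hnc]] HD].
  case: WW => [hw|hw].
  + have : is_label (bul l, b) d j LCirc.
      split; first exact: hw.
      case=> k [k1 Hk]; rewrite /cir /= in Hk.
      have E : ((k + part (cir l) i)%N%:R : K) = (i + part b k)%N%:R.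
        have E0 : (k%:R - d - (part b k)%:R : K) = i%:R - d - (part (cir l) i)%:R.
          by rewrite -Hk -Hi.
        apply/eqP; rewrite -subr_eq0 !natrD.
        have -> : (k%:R + (part (cir l) i)%:R - (i%:R + (part b k)%:R) : K) =
           (k%:R - d - (part b k)%:R) - (i%:R - d - (part (cir l) i)%:R) by ring.
        by rewrite E0 subrr.
      move/(nat_inj HK): E => E.
      case: (eqVneq k i) => [e|ne]; first by rewrite e Hbi in E; lia.
      rewrite Hbk // in E.
      case: (ltngtP k i) => c.
      * have := mono _ _ (ltnW c); lia.
      * have := mono _ _ c; lia.
      * by rewrite c eqxx in ne.
    move/(D_circ HD) => [_ hv]; apply: hv; by rewrite /inV Hnc.
  + have : is_label (bul l, b) d (j+1) LCross.
      split; first exact: hw.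
      exists i; split => //; rewrite /cir /= Hbi.
      rewrite intrD Hi -subn1 natrB //; ring.
    move/(D_cross HD) => [_ hv]; apply: nV; move: hv; by rewrite /inV Hnc.
Qed.
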